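(* There exists $\varepsilon_0>0$ such that for all $\varepsilon\in(0,\varepsilon_0)$ the following holds. Let $R^*\in\{R^{(1)},R^{(2)}\}$, let $\widehat T$ be a directed tree on $\{X,Y,Z\}$ satisfying $D_{\mathrm{KL}}(R^*\,\|\,R^*_{\widehat T})\le\frac{\varepsilon}{100}$, and let $\widehat R=\arg\min_{R\in\{R^{(1)},R^{(2)}\}}D_{\mathrm{KL}}(R\,\|\,R_{\widehat T})$. Then $\widehat R=R^*$.
   Context: Let $X,N_1,N_2$ be independent $\mathcal{N}(0,1)$ variables. $R^{(1)}$ is the distribution of $(X,Y,Z)$ with $Y=(1-\sqrt\varepsilon)X+\sqrt\varepsilon N_1$ and $Z=\frac12X+\frac12N_2$; $R^{(2)}$ is the distribution of $(X,Y,Z)$ with $Y=(1-\sqrt\varepsilon)X+\sqrt\varepsilon N_1$ and $Z=\frac12Y+\frac12N_2$. A directed tree on $\{X,Y,Z\}$ is a directed graph with a root from which every other vertex is reached by exactly one directed path. For a distribution $R$ and a directed tree $T$, $R_T=\arg\min_QD_{\mathrm{KL}}(R\,\|\,Q)$ over Gaussian $Q$ whose density factorizes as $\prod_vQ(v\mid\mathrm{pa}_T(v))$. *)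

(* Defs.v *)
From HB Require Import structures.
From mathcomp Require Import all_boot all_order all_algebra.
From mathcomp Require Import reals.
From mathcomp.analysis Require Import sequences exp trigo.
Set Implicit Arguments. Unset Strict Implicit. Unset Printing Implicit Defensive.
Import Order.TTheory GRing.Theory Num.Theory.
Local Open Scope ring_scope.

Section Defs.
Variable R : realType.

(* Coordinates: 0 = X, 1 = Y, 2 = Z. *)

Definition posdef n (S : 'M[R]_n) : Prop :=
  S^T = S /\ forall v : 'cV[R]_n, v != 0 -> 0 < (v^T *m S *m v) 0 0.

Definition gauss_density n (mu : 'cV[R]_n) (S : 'M[R]_n) (x : 'cV[R]_n) : R :=
  ((Num.sqrt (2 * pi)) ^+ n)^-1 * (Num.sqrt (\det S))^-1 *
  expR (- (2^-1) * ((x - mu)^T *m invmx S *m (x - mu)) 0 0).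

Definition sub_cV (A : {set 'I_3}) (v : 'cV[R]_3) : 'cV[R]_#|A| :=
  \col_(i < #|A|) v (enum_val i) 0.
Definition sub_M (A : {set 'I_3}) (S : 'M[R]_3) : 'M[R]_#|A| :=
  \matrix_(i < #|A|, j < #|A|) S (enum_val i) (enum_val j).

(** Marginal density of the coordinates in A under N(mu, S) (the marginal of a
    Gaussian is the Gaussian with the sub-mean and sub-covariance; for A = set0
    this is the constant 1). *)
Definition marg_density (A : {set 'I_3}) (mu : 'cV[R]_3) (S : 'M[R]_3)
    (x : 'cV[R]_3) : R :=
  gauss_density (sub_cV A mu) (sub_M A S) (sub_cV A x).

Definition dtree (E : rel 'I_3) : Prop :=
  exists r : 'I_3,
    (forall u, ~~ E u r) /\
    (forall v, v != r -> #|[set u | E u v]| = 1%N) /\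
    (forall v, connect E r v).

Definition parents (E : rel 'I_3) (v : 'I_3) : {set 'I_3} := [set u | E u v].

Definition factorizes (E : rel 'I_3) (mu : 'cV[R]_3) (S : 'M[R]_3) : Prop :=
  forall x : 'cV[R]_3,
    gauss_density mu S x =
    \prod_(v < 3) (marg_density (v |: parents E v) mu S x /
                   marg_density (parents E v) mu S x).

Definition KL (m1 : 'cV[R]_3) (S1 : 'M[R]_3) (m2 : 'cV[R]_3) (S2 : 'M[R]_3) : R :=
  2^-1 * (\tr (invmx S2 *m S1) + ((m2 - m1)^T *m invmx S2 *m (m2 - m1)) 0 0
          - 3%:R + ln (\det S2 / \det S1)).

(** (mQ, SQ) is R_T = argmin_Q KL(R || Q) over (nondegenerate) Gaussians Q
    whose density factorizes along T. *)
Definition is_tree_proj (E : rel 'I_3) (mR : 'cV[R]_3) (SR : 'M[R]_3)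
    (mQ : 'cV[R]_3) (SQ : 'M[R]_3) : Prop :=
  posdef SQ /\ factorizes E mQ SQ /\
  forall (mQ' : 'cV[R]_3) (SQ' : 'M[R]_3), posdef SQ' -> factorizes E mQ' SQ' ->
    KL mR SR mQ SQ <= KL mR SR mQ' SQ'.

Definition mx3 (a00 a01 a02 a10 a11 a12 a20 a21 a22 : R) : 'M[R]_3 :=
  \matrix_(i < 3, j < 3)
    nth 0 (nth [::] [:: [:: a00; a01; a02]; [:: a10; a11; a12]; [:: a20; a21; a22]] i) j.

(** Mixing matrices: (X,Y,Z)^T = A (X,N1,N2)^T with X,N1,N2 iid N(0,1). *)
Definition mixA (eps : R) (two : bool) : 'M[R]_3 :=
  let s := Num.sqrt eps in
  let a := 1 - s in
  if ~~ two then
    (* R^(1): Y = (1-sqrt eps) X + sqrt eps N1, Z = X/2 + N2/2 *)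
    mx3 1 0 0  a s 0  (2^-1) 0 (2^-1)
  else
    (* R^(2): Y = (1-sqrt eps) X + sqrt eps N1, Z = Y/2 + N2/2 *)
    mx3 1 0 0  a s 0  (a / 2) (s / 2) (2^-1).

(** R^(1) (two = false) and R^(2) (two = true): the law N(0, A A^T). *)
Definition Rmean : 'cV[R]_3 := 0.
Definition Rcov (eps : R) (two : bool) : 'M[R]_3 := mixA eps two *m (mixA eps two)^T.

End Defs.

(* Main.v *)
Require Import Defs.
From HB Require Import structures.
From mathcomp Require Import all_boot all_order all_algebra.
From mathcomp Require Import reals.
From mathcomp.analysis Require Import sequences exp trigo.
From mathcomp Require Import ring lra.
Import Order.TTheory GRing.Theory Num.Theory.
Local Open Scope ring_scope.

Definition i0 : 'I_3 := @Ordinal 3 0 isT.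
Definition i1 : 'I_3 := @Ordinal 3 1 isT.
Definition i2 : 'I_3 := @Ordinal 3 2 isT.

Lemma ord3P (P : 'I_3 -> Prop) : P i0 -> P i1 -> P i2 -> forall i, P i.
Proof.
by move=> H0 H1 H2 [[|[|[|//]]] Hi]; [have -> : Ordinal Hi = i0 | have -> : Ordinal Hi = i1 | have -> : Ordinal Hi = i2]; rewrite // ; apply/val_inj.
Qed.

Lemma sum3 (R : nmodType) (F : 'I_3 -> R) : \sum_(i < 3) F i = F i0 + F i1 + F i2.
Proof.
rewrite !big_ord_recr big_ord0 /= add0r.
by congr (F _ + F _ + F _); apply/val_inj.
Qed.

Lemma prod3 (R : comNzRingType) (F : 'I_3 -> R) : \prod_(i < 3) F i = F i0 * F i1 * F i2.
Proof.
rewrite !big_ord_recr big_ord0 /= mul1r.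
by congr (F _ * F _ * F _); apply/val_inj.
Qed.

Definition ordn (n : nat) : 'I_3 := match n with 0 => i0 | 1 => i1 | _ => i2 end.
Lemma ordnE (i : 'I_3) : i = ordn (val i).
Proof. by case: i => [[|[|[|//]]] Hi] /=; apply/val_inj. Qed.

Ltac normord :=
  repeat match goal with
  | |- context [ @fun_of_matrix ?R 3 3 ?A ?i ?j ] =>
      first [ match i with i0 => fail 1 | i1 => fail 1 | i2 => fail 1 | _ => rewrite [i](ordnE i) /= end
            | match j with i0 => fail 1 | i1 => fail 1 | i2 => fail 1 | _ => rewrite [j](ordnE j) /= end ]
  end.

Lemma det3 (R : comUnitRingType) (A : 'M[R]_3) : \det A =
  A i0 i0 * (A i1 i1 * A i2 i2 - A i1 i2 * A i2 i1)
  - A i0 i1 * (A i1 i0 * A i2 i2 - A i1 i2 * A i2 i0)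
  + A i0 i2 * (A i1 i0 * A i2 i1 - A i1 i1 * A i2 i0).
Proof.
rewrite (expand_det_row _ i0) sum3 /cofactor.
rewrite !(expand_det_row _ ord0) !big_ord_recr big_ord0 /= /cofactor.
rewrite !det_mx11 !mxE /= !big_ord0 !add0r.
normord.
rewrite !add0n; ring.
Qed.

Definition cv3 {R : nzRingType} (x y z : R) : 'cV[R]_3 := \col_(i < 3) nth 0 [:: x; y; z] i.

Lemma qf3 (R : comNzRingType) (u v : 'cV[R]_3) (S : 'M[R]_3) :
  (u^T *m S *m v) 0 0 = \sum_(i < 3) \sum_(j < 3) u i 0 * S i j * v j 0.
Proof.
rewrite mxE (eq_bigr (fun j => \sum_(i < 3) u i 0 * S i j * v j 0)); last first.
  by move=> j _; rewrite mxE big_distrl /=; apply: eq_bigr => i _; rewrite mxE.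
by rewrite exchange_big.
Qed.

Lemma cv3_neq0 (R : nzRingType) (x y z : R) : (x != 0) || (y != 0) || (z != 0) -> cv3 x y z != 0.
Proof.
move=> H; apply/negP => /eqP E.
have : forall i, (cv3 x y z) i 0 = 0 by move=> i; rewrite E mxE.
move=> H0; move: (H0 i0) (H0 i1) (H0 i2); rewrite !mxE /= => hx hy hz.
by move: H; rewrite hx hy hz eqxx.
Qed.

Lemma qf_cv3 (R : comNzRingType) (x y z : R) (S : 'M[R]_3) :
  ((cv3 x y z)^T *m S *m cv3 x y z) 0 0 =
   x * S i0 i0 * x + x * S i0 i1 * y + x * S i0 i2 * z
 + (y * S i1 i0 * x + y * S i1 i1 * y + y * S i1 i2 * z)
 + (z * S i2 i0 * x + z * S i2 i1 * y + z * S i2 i2 * z).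
Proof. by rewrite qf3 !sum3 !mxE /=. Qed.

Section PD.
Variable R : realType.

Lemma posdef_det (S : 'M[R]_3) : posdef S -> 0 < \det S.
Proof.
move=> [HT HP].
have sym i j : S j i = S i j by rewrite -{1}HT mxE.
set m := S i0 i0 * S i1 i1 - S i0 i1 ^+ 2.
have h1 : 0 < ((cv3 1 0 0)^T *m S *m cv3 1 0 0) 0 0.
  by apply: HP; apply: cv3_neq0; rewrite oner_eq0.
have h2 : 0 < ((cv3 (- S i0 i1) (S i0 i0) 0)^T *m S *m cv3 (- S i0 i1) (S i0 i0) 0) 0 0.
  apply: HP; apply: cv3_neq0; rewrite qf_cv3 in h1.
  apply/orP; left; apply/orP; right; apply: lt0r_neq0; move: h1; rewrite !(mul0r, mulr0, add0r, addr0, mul1r, mulr1) //.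
rewrite !qf_cv3 !(mul0r, mulr0, add0r, addr0, mul1r, mulr1) in h1 h2.
have hm : 0 < m.
  rewrite (sym i0 i1) in h2.
  have e : S i0 i0 * m = (- S i0 i1 * S i0 i0 * - S i0 i1 + - S i0 i1 * S i0 i1 * S i0 i0 + (S i0 i0 * S i0 i1 * - S i0 i1 + S i0 i0 * S i1 i1 * S i0 i0)) by rewrite /m; ring.
  by rewrite -e pmulr_rgt0 in h2.
have h3 : 0 < ((cv3 (S i0 i1 * S i1 i2 - S i0 i2 * S i1 i1) (S i0 i2 * S i0 i1 - S i0 i0 * S i1 i2) m)^T *m S *m cv3 (S i0 i1 * S i1 i2 - S i0 i2 * S i1 i1) (S i0 i2 * S i0 i1 - S i0 i0 * S i1 i2) m) 0 0.
  by apply: HP; apply: cv3_neq0; rewrite (lt0r_neq0 hm) !orbT.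
have e : ((cv3 (S i0 i1 * S i1 i2 - S i0 i2 * S i1 i1) (S i0 i2 * S i0 i1 - S i0 i0 * S i1 i2) m)^T *m S *m cv3 (S i0 i1 * S i1 i2 - S i0 i2 * S i1 i1) (S i0 i2 * S i0 i1 - S i0 i0 * S i1 i2) m) 0 0 = \det S * m.
  rewrite qf_cv3 det3 /m (sym i0 i1) (sym i0 i2) (sym i1 i2); ring.
by rewrite e pmulr_lgt0 in h3.
Qed.

Lemma posdef_unit (S : 'M[R]_3) : posdef S -> S \in unitmx.
Proof. by move=> H; rewrite unitmxE unitfE lt0r_neq0 // (@posdef_det S H). Qed.

Lemma posdef_inv (S : 'M[R]_3) : posdef S -> posdef (invmx S).
Proof.
move=> H; have Su := @posdef_unit S H; case: H => [HT HP]; split.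
  by rewrite trmx_inv HT.
move=> v v0; set w := invmx S *m v.
have e : v^T *m invmx S *m v = w^T *m S *m w.
  rewrite /w trmx_mul trmx_inv HT -!mulmxA; congr (_ *m _).
  by rewrite (mulmxA S) mulmxV // mul1mx.
rewrite e; apply: HP; apply/negP => /eqP w0.
move/negP: v0; apply; apply/eqP.
by rewrite -[v]mul1mx -(mulmxV Su) -mulmxA -/w w0 mulmx0.
Qed.
End PD.

Section Fact.
Variable R : realType.

Lemma marg_local (A : {set 'I_3}) (mu : 'cV[R]_3) (S : 'M[R]_3) (x y : 'cV[R]_3) :
  (forall i, i \in A -> x i 0 = y i 0) -> marg_density A mu S x = marg_density A mu S y.
Proof.
move=> H; rewrite /marg_density; congr (gauss_density _ _ _).
by apply/matrixP => i j; rewrite !mxE; apply: H; apply: enum_valP.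
Qed.
Arguments marg_local [A mu S x y].

Lemma qdelta (P : 'M[R]_3) (i j : 'I_3) :
  (((delta_mx i (0 : 'I_1)) : 'cV[R]_3)^T *m P *m (delta_mx j (0 : 'I_1) : 'cV[R]_3)) 0 0 = P i j.
Proof. by rewrite trmx_delta -rowE -colE !mxE. Qed.

Lemma addE1 (A B : 'M[R]_(1,1)) : (A + B) 0 0 = A 0 0 + B 0 0.
Proof. by rewrite mxE. Qed.

Lemma qsum (P : 'M[R]_3) (u w : 'cV[R]_3) :
  ((u + w)^T *m P *m (u + w)) 0 0 = (u^T *m P *m u) 0 0 + (u^T *m P *m w) 0 0
    + (w^T *m P *m u) 0 0 + (w^T *m P *m w) 0 0.
Proof.
have eT : (u + w)^T = u^T + w^T by apply/matrixP => i j; rewrite !mxE.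
rewrite eT !mulmxDl !mulmxDr !addE1.
by rewrite !addrA.
Qed.

Lemma gauss_shift (mu u : 'cV[R]_3) (S : 'M[R]_3) :
  gauss_density mu S (mu + u) =
  ((Num.sqrt (2 * pi)) ^+ 3)^-1 * (Num.sqrt (\det S))^-1 *
  expR (- (2^-1) * (u^T *m invmx S *m u) 0 0).
Proof. by rewrite /gauss_density (addrC mu u) addrK. Qed.

Lemma fact_zero (T : rel 'I_3) (mu : 'cV[R]_3) (S : 'M[R]_3) (a b : 'I_3) :
  posdef S -> a != b ->
  (forall v, ~~ ((a \in v |: parents T v) && (b \in v |: parents T v))) ->
  factorizes T mu S -> invmx S a b + invmx S b a = 0.
Proof.
move=> HS ab Hu Hf.
set ea : 'cV[R]_3 := delta_mx a 0; set eb : 'cV[R]_3 := delta_mx b 0.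
set x00 := mu; set x10 := mu + ea; set x01 := mu + eb; set x11 := mu + (ea + eb).
pose F v x := marg_density (v |: parents T v) mu S x / marg_density (parents T v) mu S x.
have Floc v (x y : 'cV[R]_3) : (forall i, i \in v |: parents T v -> x i 0 = y i 0) -> F v x = F v y.
  move=> H; rewrite /F (marg_local H); congr (_ / _); apply: marg_local => i Hi.
  by apply: H; rewrite setU1r.
have Fmix v : F v x11 * F v x00 = F v x10 * F v x01.
  case/nandP: (Hu v) => Hn.
    rewrite (Floc v x11 x01) ?(Floc v x10 x00) 1?mulrC // => i Hi;
      have ia : (i == a) = false by apply/negbTE; apply: contraNneq Hn => <-.
      by rewrite /x10 /x00 !mxE ia addr0.
    by rewrite /x11 /x01 !mxE ia add0r.
  rewrite (Floc v x11 x10) ?(Floc v x01 x00) // => i Hi;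
    have ib : (i == b) = false by apply/negbTE; apply: contraNneq Hn => <-.
    by rewrite /x01 /x00 !mxE ib addr0.
  by rewrite /x11 /x10 !mxE ib addr0.
have G : gauss_density mu S x11 * gauss_density mu S x00 =
         gauss_density mu S x10 * gauss_density mu S x01.
  rewrite !Hf -!big_split /=; apply: eq_bigr => v _; exact: Fmix.
have e0 : gauss_density mu S x00 = gauss_density mu S (mu + 0) by rewrite addr0.
rewrite e0 /x11 /x10 /x01 !gauss_shift in G.
rewrite mulmx0 qsum !qdelta mxE in G.
set K := (_ * (Num.sqrt (\det S))^-1) in G.
have K0 : K != 0.
  have hd := @posdef_det R S HS.
  by apply: mulf_neq0; rewrite invr_eq0 ?expf_neq0 // lt0r_neq0 // sqrtr_gt0 ?mulr_gt0 ?pi_gt0.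
rewrite mulrACA [in RHS]mulrACA -!expRD in G.
move/(mulfI (mulf_neq0 K0 K0))/expR_inj: G.
move=> G; lra.
Qed.
End Fact.

Definition Unc (T : rel 'I_3) (a b : 'I_3) :=
  forall v, ~~ ((a \in v |: parents T v) && (b \in v |: parents T v)).

Lemma booltaut (t01 t10 t02 t20 t12 t21 : bool) :
  ~~ (t10 && t20) -> ~~ (t01 && t21) -> ~~ (t02 && t12) ->
  (~~ t10 && ~~ t20) || (~~ t01 && ~~ t21) || (~~ t02 && ~~ t12) ->
  (~~ t12 && ~~ t21) || (~~ t02 && ~~ t20) || (~~ t01 && ~~ t10).
Proof. by case: t01; case: t10; case: t02; case: t20; case: t12; case: t21. Qed.

Lemma tree_unc (T : rel 'I_3) : dtree T -> Unc T i1 i2 \/ Unc T i0 i2 \/ Unc T i0 i1.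
Proof.
case=> r [Hr [H1 _]].
have up u u' v : T u v -> T u' v -> u = u'.
  move=> h h'; case: (eqVneq v r) => [e|ne].
    by move: (Hr u); rewrite -e h.
  move/eqP: (H1 v ne) => /cards1P [p Hp].
  have : u \in [set u | T u v] by rewrite inE.
  have : u' \in [set u | T u v] by rewrite inE.
  by rewrite Hp !inE => /eqP -> /eqP ->.
have Uof a b : a != b -> ~~ T a b -> ~~ T b a -> Unc T a b.
  move=> ab h1 h2 v; rewrite /parents !inE.
  apply/negP => /andP [/orP[/eqP av|tav] /orP[/eqP bv|tbv]].
  - by move: ab; rewrite av bv eqxx.
  - by move: h2; rewrite av tbv.
  - by move: h1; rewrite bv tav.
  - by move: ab; rewrite (up _ _ _ tav tbv) eqxx.
have upb u u' v : u != u' -> ~~ (T u v && T u' v).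
  move=> uu; apply/negP => /andP [h h']; by move: uu; rewrite (up _ _ _ h h') eqxx.
have := @booltaut _ _ _ _ _ _ (upb i1 i2 i0 isT) (upb i0 i2 i1 isT) (upb i0 i1 i2 isT).
have rc : (~~ T i1 i0 && ~~ T i2 i0) || (~~ T i0 i1 && ~~ T i2 i1) || (~~ T i0 i2 && ~~ T i1 i2).
  move: (Hr i0) (Hr i1) (Hr i2); move: r {Hr H1}; apply: ord3P => /= h0 h1 h2.
  - by rewrite h1 h2.
  - by rewrite h0 h2 orbT.
  - by rewrite h0 h1 orbT.
move=> /(_ rc) /orP [/orP [/andP [a b]|/andP [a b]]|/andP [a b]].
- by left; apply: Uof.
- by right; left; apply: Uof.
- by right; right; apply: Uof.
Qed.

Section Key.
Variable R : realType.

Lemma ln_le_sub1 (x : R) : 0 < x -> ln x <= x - 1.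
Proof.
move=> x0; have := @le_ln1Dx R (x - 1); rewrite (addrC 1 (x - 1)) subrK; apply.
by rewrite ltrBrDr addrC subrr.
Qed.

Lemma ln_ge_1sub (x : R) : 0 < x -> 1 - x^-1 <= ln x.
Proof.
move=> x0; have := @ln_le_sub1 x^-1; rewrite invr_gt0 => /(_ x0).
rewrite lnV ?posrE //; lra.
Qed.

Lemma key (paa pbb pcc pac pcb saa sbb scc sac sbc dS : R) :
  0 < paa -> 0 < pbb -> 0 < paa*pbb*pcc - paa*pcb^+2 - pac^+2*pbb -> 0 < scc ->
  0 < saa - sac^+2/scc -> 0 < sbb - sbc^+2/scc -> 0 < dS ->
  1 - dS / ((saa - sac^+2/scc) * (sbb - sbc^+2/scc) * scc) <=
  paa*saa + pbb*sbb + pcc*scc + 2*pac*sac + 2*pcb*sbc - 3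
   + ln ((paa*pbb*pcc - paa*pcb^+2 - pac^+2*pbb)^-1 / dS).
Proof.
set dP := _ - _ - _; set Va := saa - _; set Vb := sbb - _.
move=> ha hb hP hc hVa hVb hS.
set ua := saa + 2*(pac/paa)*sac + (pac/paa)^+2*scc.
set ub := sbb + 2*(pcb/pbb)*sbc + (pcb/pbb)^+2*scc.
have uaV : Va <= ua.
  have -> : ua = Va + (pac/paa*scc + sac)^+2/scc.
    by rewrite /ua /Va; field; rewrite !lt0r_neq0.
  by rewrite lerDl divr_ge0 // ?sqr_ge0 // ltW.
have ubV : Vb <= ub.
  have -> : ub = Vb + (pcb/pbb*scc + sbc)^+2/scc.
    by rewrite /ub /Vb; field; rewrite !lt0r_neq0.
  by rewrite lerDl divr_ge0 // ?sqr_ge0 // ltW.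
have hua : 0 < ua by apply: lt_le_trans uaV.
have hub : 0 < ub by apply: lt_le_trans ubV.
set w := dP / (paa * pbb).
have hw : 0 < w by rewrite divr_gt0 // mulr_gt0.
set t1 := paa * ua; set t2 := pbb * ub; set t3 := w * scc.
have h1 : 0 < t1 by rewrite mulr_gt0.
have h2 : 0 < t2 by rewrite mulr_gt0.
have h3 : 0 < t3 by rewrite mulr_gt0.
have etr : paa*saa + pbb*sbb + pcc*scc + 2*pac*sac + 2*pcb*sbc = t1 + t2 + t3.
  by rewrite /t1 /t2 /t3 /ua /ub /w /dP; field; rewrite !lt0r_neq0.
set Z := ua * ub * scc / dS.
have hZ : 0 < Z by rewrite divr_gt0 // !mulr_gt0.
have eln : (dP^-1 / dS) = Z / (t1 * t2 * t3).
  by rewrite /Z /t1 /t2 /t3 /w; field; rewrite !lt0r_neq0.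
have p12 : 0 < t1 * t2 by rewrite mulr_gt0.
have eZ : ln (Z / (t1*t2*t3)) = ln Z - ln t1 - ln t2 - ln t3.
  rewrite ln_div; [|by rewrite posrE|by rewrite posrE mulr_gt0].
  rewrite lnM; [|by rewrite posrE|by rewrite posrE].
  rewrite lnM; [|by rewrite posrE|by rewrite posrE].
  lra.
rewrite etr eln eZ.
have l1 := @ln_le_sub1 t1 h1; have l2 := @ln_le_sub1 t2 h2; have l3 := @ln_le_sub1 t3 h3.
have lZ := @ln_ge_1sub Z hZ.
have : dS / (ua * ub * scc) <= dS / (Va * Vb * scc).
  rewrite ler_pM2l // lef_pV2 ?posrE ?mulr_gt0 // ler_pM2r //.
  by apply: ler_pM => //; apply: ltW.
have : Z^-1 = dS / (ua * ub * scc) by rewrite /Z invf_div.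
lra.
Qed.
End Key.

Section Cov.
Variable R : realType.

Lemma Rcov1 (eps : R) : let s := Num.sqrt eps in
  Rcov eps false = mx3 1 (1-s) (2^-1) (1-s) ((1-s)^+2+s^+2) ((1-s)/2) (2^-1) ((1-s)/2) (2^-1).
Proof.
move=> s; apply/matrixP; apply: ord3P; apply: ord3P;
  rewrite /Rcov /mixA /= !mxE sum3 !mxE /= -/s; by field.
Qed.

Lemma Rcov2 (eps : R) : let s := Num.sqrt eps in
  Rcov eps true = mx3 1 (1-s) ((1-s)/2) (1-s) ((1-s)^+2+s^+2) (((1-s)^+2+s^+2)/2)
     ((1-s)/2) (((1-s)^+2+s^+2)/2) (((1-s)^+2+s^+2+1)/4).
Proof.
move=> s; apply/matrixP; apply: ord3P; apply: ord3P;
  rewrite /Rcov /mixA /= !mxE sum3 !mxE /= -/s; by field.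
Qed.
End Cov.

Section Glue.
Variable R : realType.

Lemma delta_neq0 (a : 'I_3) : (delta_mx a 0 : 'cV[R]_3) != 0.
Proof.
apply/negP => /eqP E; have := congr1 (fun M : 'cV[R]_3 => M a 0) E.
by rewrite !mxE !eqxx /= => /eqP; rewrite oner_eq0.
Qed.

Lemma glue (a b c : 'I_3) (Sig S : 'M[R]_3) (m : 'cV[R]_3) :
  posdef S ->
  (forall f : 'I_3 -> R, \sum_(i < 3) f i = f a + f b + f c) ->
  (forall P : 'M[R]_3, (forall i j, P j i = P i j) -> P a b = 0 ->
     \det P = P a a * P b b * P c c - P a a * P c b ^+2 - P a c ^+2 * P b b) ->
  Sig^T = Sig ->
  invmx S a b + invmx S b a = 0 ->
  0 < Sig c c -> 0 < Sig a a - Sig a c ^+2 / Sig c c -> 0 < Sig b b - Sig b c ^+2 / Sig c c ->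
  0 < \det Sig ->
  2^-1 * (1 - \det Sig / ((Sig a a - Sig a c ^+2 / Sig c c) * (Sig b b - Sig b c ^+2 / Sig c c) * Sig c c))
   <= KL 0 Sig m S.
Proof.
move=> HS hperm hdet HSig hab hc hVa hVb hdS.
have HP := @posdef_inv R S HS.
set P := invmx S in hab HP *.
case: (HP) => [PT PP].
have symP i j : P j i = P i j by rewrite -{1}PT mxE.
have symS i j : Sig j i = Sig i j by rewrite -{1}HSig mxE.
have Pab : P a b = 0.
  by move: hab; rewrite (symP a b); lra.
have pos i : 0 < P i i by rewrite -qdelta; apply: PP; apply: delta_neq0.
have dPS : \det P = (\det S)^-1 by rewrite det_inv.
have hdS0 := @posdef_det R S HS.
have dPpos : 0 < \det P by rewrite dPS invr_gt0.
have dSP : \det S = (\det P)^-1 by rewrite dPS invrK.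
have hq : 0 <= ((m - 0)^T *m P *m (m - 0)) 0 0.
  case: (eqVneq (m - 0) 0) => [->|n0]; first by rewrite mulmx0 mxE.
  by apply: ltW; apply: PP.
rewrite /KL dSP (hdet P symP Pab).
rewrite (hdet P symP Pab) in dPpos.
have K := @key R _ _ _ _ _ _ _ _ _ _ _ (pos a) (pos b) dPpos hc hVa hVb hdS.
have etr : \tr (P *m Sig) = P a a * Sig a a + P b b * Sig b b + P c c * Sig c c + 2 * P a c * Sig a c + 2 * P c b * Sig b c.
  rewrite /mxtrace (eq_bigr (fun i => \sum_(j < 3) P i j * Sig j i)); last by move=> i _; rewrite mxE.
  rewrite !hperm (symP a c) (symP c b) (symS a c) (symS b c) (symS a b) (symP a b) Pab.
  ring.
rewrite etr.
lra.
Qed.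
End Glue.

Section Cases.
Variable R : realType.

Lemma Rcov_sym (eps : R) two : (Rcov eps two)^T = Rcov eps two.
Proof. by rewrite /Rcov trmx_mul trmxK. Qed.

Lemma sfacts (eps : R) : 0 < eps -> eps < 4^-1 ->
  let s := Num.sqrt eps in [/\ 0 < s, s < 2^-1 & eps = s ^+ 2].
Proof.
move=> e0 e1 s; have s0 : 0 < s by rewrite sqrtr_gt0.
have es : eps = s ^+ 2 by rewrite sqr_sqrtr // ltW.
split => //; rewrite es in e1; nra.
Qed.

Lemma caseX (eps : R) (m : 'cV[R]_3) (S : 'M[R]_3) : 0 < eps -> eps < 4^-1 -> posdef S ->
  invmx S i1 i2 + invmx S i2 i1 = 0 -> eps / 100%:R < KL 0 (Rcov eps true) m S.
Proof.
move=> e0 e1 HS hab.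
have hperm (f : 'I_3 -> R) : \sum_(i < 3) f i = f i1 + f i2 + f i0 by rewrite sum3; ring.
have hdet (P : 'M[R]_3) : (forall i j, P j i = P i j) -> P i1 i2 = 0 ->
     \det P = P i1 i1 * P i2 i2 * P i0 i0 - P i1 i1 * P i0 i2 ^+2 - P i1 i0 ^+2 * P i2 i2.
  move=> sym z; rewrite det3 (sym i1 i0) (sym i0 i2) (sym i1 i2) z; ring.
have G := @glue R i1 i2 i0 (Rcov eps true) S m HS hperm hdet (Rcov_sym eps true) hab.
have [s0 s1 es] := @sfacts eps e0 e1.
move: G; set s := Num.sqrt eps in s0 s1 es *.
set q := (1 - s) ^+ 2 + s ^+ 2.
have c00 : Rcov eps true i0 i0 = 1 by rewrite Rcov2 mxE.
have c11 : Rcov eps true i1 i1 = q by rewrite Rcov2 mxE.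
have c10 : Rcov eps true i1 i0 = 1 - s by rewrite Rcov2 mxE.
have c22 : Rcov eps true i2 i2 = (q + 1) / 4 by rewrite Rcov2 mxE.
have c20 : Rcov eps true i2 i0 = (1 - s) / 2 by rewrite Rcov2 mxE.
have cd : \det (Rcov eps true) = s ^+ 2 / 4 by rewrite det3 Rcov2 !mxE /= -/s -/q /q; field.
rewrite c00 c11 c10 c22 c20 cd.
have eVa : q - (1 - s) ^+ 2 / 1 = s ^+ 2 by rewrite /q; field.
have eVb : (q + 1) / 4 - ((1 - s) / 2) ^+ 2 / 1 = (s ^+ 2 + 1) / 4 by rewrite /q; field.
rewrite eVa eVb.
have eX : s ^+ 2 / 4 / (s ^+ 2 * ((s ^+ 2 + 1) / 4) * 1) = (1 + s ^+ 2)^-1.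
  by field; rewrite ?expf_neq0 ?lt0r_neq0 // ?addr_gt0 ?exprn_gt0.
have p1 : 0 < s ^+ 2 by rewrite exprn_gt0.
have p2 : 0 < (s ^+ 2 + 1) / 4 by rewrite divr_gt0 // addr_gt0.
have p3 : 0 < s ^+ 2 / 4 by rewrite divr_gt0.
rewrite eX => G; apply: lt_le_trans (G ltr01 p1 p2 p3).
set t := (1 + s ^+ 2)^-1.
have ht : t * (1 + s ^+ 2) = 1 by rewrite mulVf // lt0r_neq0 // addr_gt0 // exprn_gt0.
have t0 : 0 < t by rewrite invr_gt0 addr_gt0 // exprn_gt0.
rewrite es; nra.
Qed.

Lemma caseY (eps : R) (m : 'cV[R]_3) (S : 'M[R]_3) : 0 < eps -> eps < 4^-1 -> posdef S ->
  invmx S i0 i2 + invmx S i2 i0 = 0 -> eps / 100%:R < KL 0 (Rcov eps false) m S.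
Proof.
move=> e0 e1 HS hab.
have hperm (f : 'I_3 -> R) : \sum_(i < 3) f i = f i0 + f i2 + f i1 by rewrite sum3; ring.
have hdet (P : 'M[R]_3) : (forall i j, P j i = P i j) -> P i0 i2 = 0 ->
     \det P = P i0 i0 * P i2 i2 * P i1 i1 - P i0 i0 * P i1 i2 ^+2 - P i0 i1 ^+2 * P i2 i2.
  move=> sym z; rewrite det3 (sym i0 i1) (sym i1 i2) (sym i0 i2) z; ring.
have G := @glue R i0 i2 i1 (Rcov eps false) S m HS hperm hdet (Rcov_sym eps false) hab.
have [s0 s1 es] := @sfacts eps e0 e1.
move: G; set s := Num.sqrt eps in s0 s1 es *.
set q := (1 - s) ^+ 2 + s ^+ 2.
set r := (1 - s) ^+ 2 + 2 * s ^+ 2.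
have q0 : 0 < q by rewrite /q; nra.
have r0 : 0 < r by rewrite /r; nra.
have c00 : Rcov eps false i0 i0 = 1 by rewrite Rcov1 mxE.
have c11 : Rcov eps false i1 i1 = q by rewrite Rcov1 mxE.
have c01 : Rcov eps false i0 i1 = 1 - s by rewrite Rcov1 mxE.
have c22 : Rcov eps false i2 i2 = 2^-1 by rewrite Rcov1 mxE.
have c21 : Rcov eps false i2 i1 = (1 - s) / 2 by rewrite Rcov1 mxE.
have cd : \det (Rcov eps false) = s ^+ 2 / 4 by rewrite det3 Rcov1 !mxE /= -/s -/q /q; field.
rewrite c00 c11 c01 c22 c21 cd.
have eVa : 1 - (1 - s) ^+ 2 / q = s ^+ 2 / q by rewrite /q; field; rewrite -/q lt0r_neq0.
have eVb : 2^-1 - ((1 - s) / 2) ^+ 2 / q = r / (4 * q) by rewrite /r /q; field; rewrite -/q lt0r_neq0.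
rewrite eVa eVb.
have eX : s ^+ 2 / 4 / (s ^+ 2 / q * (r / (4 * q)) * q) = q / r.
  by field; rewrite ?expf_neq0 ?lt0r_neq0.
have p1 : 0 < s ^+ 2 / q by rewrite divr_gt0 ?exprn_gt0.
have p2 : 0 < r / (4 * q) by rewrite divr_gt0 // mulr_gt0.
have p3 : 0 < s ^+ 2 / 4 by rewrite divr_gt0 ?exprn_gt0.
rewrite eX => G; apply: lt_le_trans (G q0 p1 p2 p3).
set t := r^-1.
have ht : r * t = 1 by rewrite mulfV // lt0r_neq0.
have t0 : 0 < t by rewrite invr_gt0.
rewrite -/t es.
have r50 : r < 50%:R by rewrite /r; nra.
have : q = r - s ^+ 2 by rewrite /q /r; ring.
move=> ->; nra.
Qed.

Lemma caseZ (eps : R) (m : 'cV[R]_3) (S : 'M[R]_3) : 0 < eps -> eps < 4^-1 -> posdef S ->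
  invmx S i0 i1 + invmx S i1 i0 = 0 -> eps / 100%:R < KL 0 (Rcov eps false) m S.
Proof.
move=> e0 e1 HS hab.
have hperm (f : 'I_3 -> R) : \sum_(i < 3) f i = f i0 + f i1 + f i2 by rewrite sum3.
have hdet (P : 'M[R]_3) : (forall i j, P j i = P i j) -> P i0 i1 = 0 ->
     \det P = P i0 i0 * P i1 i1 * P i2 i2 - P i0 i0 * P i2 i1 ^+2 - P i0 i2 ^+2 * P i1 i1.
  move=> sym z; rewrite det3 (sym i0 i1) (sym i2 i1) (sym i0 i2) z; ring.
have G := @glue R i0 i1 i2 (Rcov eps false) S m HS hperm hdet (Rcov_sym eps false) hab.
have [s0 s1 es] := @sfacts eps e0 e1.
move: G; set s := Num.sqrt eps in s0 s1 es *.
set q := (1 - s) ^+ 2 + s ^+ 2.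
set r := (1 - s) ^+ 2 + 2 * s ^+ 2.
have q0 : 0 < q by rewrite /q; nra.
have r0 : 0 < r by rewrite /r; nra.
have c00 : Rcov eps false i0 i0 = 1 by rewrite Rcov1 mxE.
have c11 : Rcov eps false i1 i1 = q by rewrite Rcov1 mxE.
have c02 : Rcov eps false i0 i2 = 2^-1 by rewrite Rcov1 mxE.
have c22 : Rcov eps false i2 i2 = 2^-1 by rewrite Rcov1 mxE.
have c12 : Rcov eps false i1 i2 = (1 - s) / 2 by rewrite Rcov1 mxE.
have cd : \det (Rcov eps false) = s ^+ 2 / 4 by rewrite det3 Rcov1 !mxE /= -/s -/q /q; field.
rewrite c00 c11 c02 c22 c12 cd.
have eVa : 1 - 2^-1 ^+ 2 / 2^-1 = 2^-1 :> R by field.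
have eVb : q - ((1 - s) / 2) ^+ 2 / 2^-1 = r / 2 by rewrite /r /q; field.
rewrite eVa eVb.
have eX : s ^+ 2 / 4 / (2^-1 * (r / 2) * 2^-1) = 2 * s ^+ 2 / r.
  by field; rewrite lt0r_neq0.
have p0 : 0 < 2^-1 :> R by rewrite invr_gt0.
have p2 : 0 < r / 2 by rewrite divr_gt0.
have p3 : 0 < s ^+ 2 / 4 by rewrite divr_gt0 ?exprn_gt0.
rewrite eX => G; apply: lt_le_trans (G p0 p0 p2 p3).
set t := r^-1.
have ht : r * t = 1 by rewrite mulfV // lt0r_neq0.
have t0 : 0 < t by rewrite invr_gt0.
rewrite -/t es.
have r2 : r < 2 by rewrite /r; nra.
have : 1 - 2 * s ^+ 2 * t = (1 - s) ^+ 2 * t.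
  by rewrite -{1}ht /r; ring.
move=> ->; nra.
Qed.
End Cases.

(* Index false = R^(1), true = R^(2). *)
Theorem lemma7 (R : realType) :
  exists eps0 : R, 0 < eps0 /\
  forall eps : R, 0 < eps -> eps < eps0 ->
  forall (istar : bool) (T : rel 'I_3), dtree T ->
  forall (mQ : bool -> 'cV[R]_3) (SQ : bool -> 'M[R]_3),
    (forall i, is_tree_proj T (Rmean R) (Rcov eps i) (mQ i) (SQ i)) ->
    KL (Rmean R) (Rcov eps istar) (mQ istar) (SQ istar) <= eps / 100%:R ->
    forall ihat : bool,
      (forall j : bool, KL (Rmean R) (Rcov eps ihat) (mQ ihat) (SQ ihat)
                        <= KL (Rmean R) (Rcov eps j) (mQ j) (SQ j)) ->
      ihat = istar.
Proof.
exists 4^-1; split; first by rewrite invr_gt0.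
move=> eps e0 e1 istar T HT mQ SQ Hproj Hstar ihat Hhat.
case: (eqVneq ihat istar) => // ne.
have Hall i : KL (Rmean R) (Rcov eps i) (mQ i) (SQ i) <= eps / 100%:R.
  case: (eqVneq i istar) => [-> //|ni].
  have -> : i = ihat by move: ni ne; clear; case: i; case: istar; case: ihat.
  exact: le_trans (Hhat istar) Hstar.
have Hpd i : posdef (SQ i) by case: (Hproj i).
have Hz i a b : a != b -> Unc T a b -> invmx (SQ i) a b + invmx (SQ i) b a = 0.
  move=> ab U; case: (Hproj i) => [Hp [Hf _]]; exact: (@fact_zero R T (mQ i) (SQ i) a b Hp ab U Hf).
rewrite /Rmean in Hall.
case: (@tree_unc T HT) => [U|[U|U]].
- have := @caseX R eps (mQ true) (SQ true) e0 e1 (Hpd true) (Hz true i1 i2 isT U).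
  have := Hall true; lra.
- have := @caseY R eps (mQ false) (SQ false) e0 e1 (Hpd false) (Hz false i0 i2 isT U).
  have := Hall false; lra.
- have := @caseZ R eps (mQ false) (SQ false) e0 e1 (Hpd false) (Hz false i0 i1 isT U).
  have := Hall false; lra.
Qed.
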